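(* For every pair $A,B$ of effect algebras, $$A\otimes B\cong L\bigl(R(A)\otimes_{\mathrm{Day}}R(B)\bigr),$$ where $\otimes_{\mathrm{Day}}$ is the Day convolution on $[\mathbf{FinBool}^{op},\mathbf{Set}]$ induced by the coproduct $*$ on $\mathbf{FinBool}$: $$(X\otimes_{\mathrm{Day}}Y)(c)=\int^{(c_1,c_2)}\mathbf{FinBool}(c,c_1*c_2)\times X(c_1)\times Y(c_2).$$
   Context: Effect algebras are partial algebras $(A;+,0,1)$ satisfying the Foulis–Bennett axioms; one-element effect algebras are allowed. Morphisms preserve $1$ and defined sums; $\mathbf{EA}$ is the category. Boolean algebras are effect algebras via: $x+y$ is defined iff $x\wedge y=0$, and then $x+y=x\vee y$. For $[n]=\{1,\dots,n\}$, $\mathbf{FinBool}$ is the full subcategory of Boolean algebras on the objects $2^{[n]}$, $n\in\mathbb N$. $E\colon\mathbf{FinBool}\to\mathbf{EA}$ is the inclusion, and $*$ is the coproduct of Boolean algebras. $R\colon\mathbf{EA}\to[\mathbf{FinBool}^{op},\mathbf{Set}]$ is given by $R(A)(2^{[n]})=\mathbf{EA}(E(2^{[n]}),A)$ and $R(A)(f)(g)=g\circ E(f)$. $L\colon[\mathbf{FinBool}^{op},\mathbf{Set}]\to\mathbf{EA}$ is given by $L(P)=\varinjlim\bigl(\int P\xrightarrow{\pi_P}\mathbf{FinBool}\xrightarrow{E}\mathbf{EA}\bigr)$. Here $\int P$ is the category of elements of $P$: - objects: pairs $(c,x)$ with $x\in P(c)$; - arrows $(c,x)\to(c',x')$: maps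 $f\colon c\to c'$ with $P(f)(x')=x$; and $\pi_P$ is the projection. $L$ is left adjoint to $R$. A bimorphism from $A,B$ to $C$ is a map $h\colon A\times B\to C$ with $h(1,1)=1$ that is additive (preserving orthogonality and sums) in each argument separately. The tensor product $A\otimes B$ is the universal (initial) bimorphism out of $A\times B$. *)

(* Defs.v *)
From HB Require Import structures.
From mathcomp Require Import all_boot all_order all_algebra.
From Stdlib Require Import Relations.
Set Implicit Arguments. Unset Strict Implicit. Unset Printing Implicit Defensive.

(* Effect algebras (Foulis--Bennett).  The partial sum is an option-valued *)
(* operation; one-element effect algebras (zero = one) are allowed.        *)
Record EffectAlgebra := {
  ea_car :> Type;
  ea_zero : ea_car;
  ea_one : ea_car;
  ea_sum : ea_car -> ea_car -> option ea_car;
  ea_comm : forall a b, ea_sum a b = ea_sum b a;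
  ea_assoc : forall a b c ab abc, ea_sum a b = Some ab -> ea_sum ab c = Some abc ->
     exists bc, ea_sum b c = Some bc /\ ea_sum a bc = Some abc;
  ea_ortho : forall a, exists! a', ea_sum a a' = Some ea_one;
  ea_zo : forall a x, ea_sum a ea_one = Some x -> a = ea_zero
}.

Definition is_eamor (A C : EffectAlgebra) (f : A -> C) : Prop :=
  f (ea_one A) = ea_one C /\
  forall a b c, ea_sum a b = Some c -> ea_sum (f a) (f b) = Some (f c).

Definition ea_iso (A C : EffectAlgebra) : Prop :=
  exists (f : A -> C) (g : C -> A), is_eamor f /\ is_eamor g /\
    (forall a, g (f a) = a) /\ (forall c, f (g c) = c).

Definition is_bimor (A B C : EffectAlgebra) (h : A -> B -> C) : Prop :=
  h (ea_one A) (ea_one B) = ea_one C /\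
  (forall b a1 a2 a, ea_sum a1 a2 = Some a -> ea_sum (h a1 b) (h a2 b) = Some (h a b)) /\
  (forall a b1 b2 b, ea_sum b1 b2 = Some b -> ea_sum (h a b1) (h a b2) = Some (h a b)).

Definition is_tensor (A B T : EffectAlgebra) (tau : A -> B -> T) : Prop :=
  is_bimor tau /\
  forall (C : EffectAlgebra) (h : A -> B -> C), is_bimor h ->
    (exists f : T -> C, is_eamor f /\ forall a b, f (tau a b) = h a b) /\
    (forall f g : T -> C, is_eamor f -> is_eamor g ->
       (forall a b, f (tau a b) = h a b) -> (forall a b, g (tau a b) = h a b) ->
       forall t, f t = g t).

(* FinBool: objects 2^[n], represented as {set 'I_n}; arrows are Boolean  *)
(* algebra homomorphisms.                                                  *)
Definition is_boolhom m n (f : {set 'I_m} -> {set 'I_n}) : Prop :=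
  f set0 = set0 /\ f setT = setT /\
  (forall X Y, f (X :|: Y) = f X :|: f Y) /\
  (forall X Y, f (X :&: Y) = f X :&: f Y) /\
  (forall X, f (~: X) = ~: f X).

Record bhom (m n : nat) := BHom {
  bfun :> {set 'I_m} -> {set 'I_n};
  bfunP : is_boolhom bfun }.

Lemma is_boolhom_comp m n k (g : {set 'I_n} -> {set 'I_k}) (f : {set 'I_m} -> {set 'I_n}) :
  is_boolhom g -> is_boolhom f -> is_boolhom (fun X => g (f X)).
Proof.
move=> [g0 [gT [gU [gI gC]]]] [f0 [fT [fU [fI fC]]]].
split; first by rewrite f0 g0.
split; first by rewrite fT gT.
split; first by move=> X Y; rewrite fU gU.
split; first by move=> X Y; rewrite fI gI.
by move=> X; rewrite fC gC.
Qed.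

Definition bcomp m n k (g : bhom n k) (f : bhom m n) : bhom m k :=
  BHom (is_boolhom_comp (bfunP g) (bfunP f)).

(* The chosen coproduct 2^[m] * 2^[n] = 2^[m*n] in FinBool, via the
   bijection mxvec_index : 'I_m * 'I_n -> 'I_(m*n). *)
Definition cinl m n (X : {set 'I_m}) : {set 'I_(m * n)} :=
  [set k | [exists i in X, exists j : 'I_n, k == mxvec_index i j]].
Definition cinr m n (Y : {set 'I_n}) : {set 'I_(m * n)} :=
  [set k | [exists i : 'I_m, exists j in Y, k == mxvec_index i j]].

Definition is_coprod_map m n m' n' (u : bhom m m') (v : bhom n n')
    (w : bhom (m * n) (m' * n')) : Prop :=
  (forall X, w (cinl n X) = cinl n' (u X)) /\
  (forall Y, w (cinr m Y) = cinr m' (v Y)).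

(* R(A)(2^[n]) = EA(E(2^[n]), A); an EA morphism out of E(2^[n]) is a map *)
(* g with g [n] = 1 and g(X) + g(Y) = g(X \/ Y) whenever X /\ Y = 0.       *)
Definition is_beamor n (A : EffectAlgebra) (g : {set 'I_n} -> A) : Prop :=
  g setT = ea_one A /\
  forall X Y : {set 'I_n}, [disjoint X & Y] -> ea_sum (g X) (g Y) = Some (g (X :|: Y)).

Record RA (A : EffectAlgebra) (n : nat) := MkRA {
  rfun :> {set 'I_n} -> A;
  rfunP : is_beamor rfun }.

Lemma is_beamor_pre (A : EffectAlgebra) m n (g : {set 'I_n} -> A) (f : bhom m n) :
  is_beamor g -> is_beamor (fun X => g (f X)).
Proof.
case: f => f [f0 [fT [fU [fI fC]]]] [gT gS]; split => /=; first by rewrite fT.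
move=> X Y dXY; rewrite fU; apply: gS.
by rewrite -setI_eq0 -fI; move: dXY; rewrite -setI_eq0 => /eqP ->; rewrite f0.
Qed.

Definition ramap A m n (f : bhom m n) (g : RA A n) : RA A m :=
  MkRA (is_beamor_pre f (rfunP g)).

(* Day convolution  (R(A) (x)_Day R(B))(c) =                               *)
(*   \int^{(c1,c2)} FinBool(c, c1*c2) x R(A)(c1) x R(B)(c2),               *)
(* realised as the usual quotient of the disjoint union by the coend       *)
(* relation (equivalence closure).                                         *)
Record DayEl (A B : EffectAlgebra) (p : nat) := MkDay {
  dm : nat; dn : nat;
  dh : bhom p (dm * dn);
  da : RA A dm;
  db : RA B dn }.

Inductive day_step (A B : EffectAlgebra) (p : nat) : DayEl A B p -> DayEl A B p -> Prop :=
| DayStep m n m' n' (u : bhom m m') (v : bhom n n') (w : bhom (m * n) (m' * n'))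
    (h : bhom p (m * n)) (a' : RA A m') (b' : RA B n') :
    is_coprod_map u v w ->
    day_step (MkDay h (ramap u a') (ramap v b'))
             (MkDay (bcomp w h) a' b').

Definition day_eq (A B : EffectAlgebra) (p : nat) : relation (DayEl A B p) :=
  clos_refl_sym_trans _ (@day_step A B p).

Definition day_act A B p q (k : bhom p q) (y : DayEl A B q) : DayEl A B p :=
  MkDay (bcomp (dh y) k) (da y) (db y).

(* L(D) = colim( \int D --pi--> FinBool --E--> EA ), for D the Day         *)
(* convolution above.  Objects of \int D: (p, x) with x in D(2^[p]);       *)
(* arrows (p,x) -> (q,y): k : 2^[p] -> 2^[q] with D(k)(y) = x.             *)
Definition el_arrow A B p q (x : DayEl A B p) (y : DayEl A B q) (k : bhom p q) : Prop :=
  day_eq (day_act k y) x.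

Definition is_cocone (A B C : EffectAlgebra)
    (psi : forall p, DayEl A B p -> {set 'I_p} -> C) : Prop :=
  (forall p x, is_beamor (psi p x)) /\
  (forall p q (x : DayEl A B p) (y : DayEl A B q) (k : bhom p q),
     el_arrow x y k -> forall X, psi q y (k X) = psi p x X).

Definition is_colimit (A B Lo : EffectAlgebra)
    (phi : forall p, DayEl A B p -> {set 'I_p} -> Lo) : Prop :=
  is_cocone phi /\
  forall (C : EffectAlgebra) (psi : forall p, DayEl A B p -> {set 'I_p} -> C),
    is_cocone psi ->
    (exists t : Lo -> C, is_eamor t /\ forall p x X, t (phi p x X) = psi p x X) /\
    (forall t1 t2 : Lo -> C, is_eamor t1 -> is_eamor t2 ->
       (forall p x X, t1 (phi p x X) = psi p x X) ->
       (forall p x X, t2 (phi p x X) = psi p x X) ->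
       forall l, t1 l = t2 l).

(* Main.v *)
Require Import Defs.
From mathcomp Require Import all_boot all_order all_algebra.
From Stdlib Require Import Relations FunctionalExtensionality ProofIrrelevance ClassicalEpsilon.
Set Implicit Arguments. Unset Strict Implicit. Unset Printing Implicit Defensive.

Section EA.
Variable C : EffectAlgebra.
Local Notation "a +? b" := (@ea_sum C a b) (at level 50).

Lemma ortho_uniq (x a b : C) : x +? a = Some (ea_one C) -> x +? b = Some (ea_one C) -> a = b.
Proof.
move=> ha hb; case: (ea_ortho x) => x' [_ U].
by rewrite -(U _ ha) -(U _ hb).
Qed.

Definition oc (x : C) : C :=
  proj1_sig (constructive_indefinite_description _ (ea_ortho x)).
Lemma ocP (x : C) : x +? oc x = Some (ea_one C).
Proof.
rewrite /oc; case: (constructive_indefinite_description _ _) => y [h _] //.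
Qed.

Lemma ocK (x : C) : oc (oc x) = x.
Proof. apply: (ortho_uniq (x:=oc x)); first exact: ocP. by rewrite ea_comm ocP. Qed.

Lemma oc1 : oc (ea_one C) = ea_zero C.
Proof. apply: (@ea_zo C _ (ea_one C)); by rewrite ea_comm ocP. Qed.

Lemma sum0 (x : C) : x +? ea_zero C = Some x.
Proof.
have h10 : ea_one C +? ea_zero C = Some (ea_one C) by rewrite -oc1 ocP.
have h : forall a : C, oc a +? ea_zero C = Some (oc a).
  move=> a; case: (ea_assoc (ocP a) h10) => bc [e1 e2].
  by rewrite e1 (ortho_uniq e2 (ocP a)).
by rewrite -(ocK x) h.
Qed.

Lemma sum0l (x : C) : ea_zero C +? x = Some x.
Proof. by rewrite ea_comm sum0. Qed.

Lemma assoc_r (a b c bc r : C) : b +? c = Some bc -> a +? bc = Some r ->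
  exists ab, a +? b = Some ab /\ ab +? c = Some r.
Proof.
move=> h1 h2; rewrite ea_comm in h1; rewrite ea_comm in h2.
case: (ea_assoc h1 h2) => ba [e1 e2].
by exists ba; split; rewrite ea_comm.
Qed.

Lemma cancel_sum (a b c r : C) : a +? b = Some r -> a +? c = Some r -> b = c.
Proof.
move=> hb hc.
case: (ea_assoc hb (ocP r)) => e [be ae].
case: (ea_assoc hc (ocP r)) => e' [ce ae'].
have ee : e = e' by rewrite (ortho_uniq ae (ocP a)) (ortho_uniq ae' (ocP a)).
subst e'.
have ha : e +? a = Some (ea_one C) by rewrite ea_comm.
case: (ea_assoc be ha) => da [d1 d2].
case: (ea_assoc ce ha) => da' [d1' d2'].
rewrite d1 in d1'; case: d1' => <- in d2'.
by apply: (ortho_uniq (x:=da)); rewrite ea_comm.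
Qed.

Lemma sum_self0 (y : C) : y +? y = Some y -> y = ea_zero C.
Proof. move=> h; apply: (cancel_sum h); exact: sum0. Qed.
End EA.

Lemma bimor_r0 (A B C : EffectAlgebra) (h : A -> B -> C) a :
  is_bimor h -> h a (ea_zero B) = ea_zero C.
Proof. move=> [_ [_ H]]; apply: sum_self0; apply: H; exact: sum0. Qed.
Lemma bimor_l0 (A B C : EffectAlgebra) (h : A -> B -> C) b :
  is_bimor h -> h (ea_zero A) b = ea_zero C.
Proof. move=> [_ [H _]]; apply: sum_self0; apply: H; exact: sum0. Qed.

Lemma beamor0 n (C : EffectAlgebra) (g : {set 'I_n} -> C) :
  is_beamor g -> g set0 = ea_zero C.
Proof.
move=> [gT gS]; apply: (@ea_zo C _ (g setT)); rewrite -gT.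
have := gS set0 setT; rewrite set0U; apply; by rewrite -setI_eq0 set0I.
Qed.

Section Osum.
Variables (C : EffectAlgebra) (I : eqType) (f : I -> C).
Fixpoint osum (l : seq I) : option C :=
  match l with [::] => Some (ea_zero C)
  | x :: l => match osum l with Some s => ea_sum (f x) s | None => None end end.

Lemma osum_split l1 l2 r : osum (l1 ++ l2) = Some r ->
  exists s1 s2, osum l1 = Some s1 /\ osum l2 = Some s2 /\ ea_sum s1 s2 = Some r.
Proof.
elim: l1 r => [|x l1 IH] r /=.
  by move=> h; exists (ea_zero C), r; rewrite sum0l.
case e: (osum (l1 ++ l2)) => [t|] // ht.
case: (IH _ e) => s1 [s2 [-> [-> hs]]].
case: (assoc_r hs ht) => ab [h1 h2].
by exists ab, s2.
Qed.

Lemma osum_merge l1 l2 s1 s2 r : osum l1 = Some s1 -> osum l2 = Some s2 ->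
  ea_sum s1 s2 = Some r -> osum (l1 ++ l2) = Some r.
Proof.
elim: l1 s1 r => [|x l1 IH] s1 r /=.
  by case=> <- ->; rewrite sum0l; case=> ->.
case e: (osum l1) => [t|] // h1 h2 h3.
case: (ea_assoc h1 h3) => bc [e1 e2].
by rewrite (IH _ _ e h2 e1).
Qed.

Lemma osum_perm_some l1 l2 r : perm_eq l1 l2 -> osum l1 = Some r -> osum l2 = Some r.
Proof.
elim: l1 l2 r => [|x l1 IH] l2 r.
  by move=> /perm_size; case: l2.
move=> pe; have xl2 : x \in l2 by rewrite -(perm_mem pe) mem_head.
move: pe; case/splitPr: xl2 => l2a l2b.
rewrite -[x :: l2b]cat1s perm_sym (perm_catCA l2a [:: x] l2b) /= perm_cons perm_sym => pe /=.
case e: (osum l1) => [s|] // hs.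
case: (osum_split (IH _ _ pe e)) => sa [sb [ea [eb eab]]].
case: (assoc_r eab hs) => u [u1 u2].
rewrite ea_comm in u1.
case: (ea_assoc u1 u2) => t [t1 t2].
apply: (osum_merge ea _ t2) => /=; by rewrite eb.
Qed.

Lemma osum_perm l1 l2 : perm_eq l1 l2 -> osum l1 = osum l2.
Proof.
move=> pe; case e1: (osum l1) => [r|]; first by rewrite (osum_perm_some pe e1).
case e2: (osum l2) => [r|] //.
have pe' : perm_eq l2 l1 by rewrite perm_sym.
by have := osum_perm_some pe' e2; rewrite e1.
Qed.
End Osum.

Section OsumSet.
Variables (C : EffectAlgebra) (k : nat) (f : 'I_k -> C).
Definition P (Z : {set 'I_k}) := osum f (enum Z).

Lemma P_list (Z : {set 'I_k}) l : uniq l -> l =i Z -> P Z = osum f l.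
Proof.
move=> ul lZ; apply: osum_perm; apply: uniq_perm => //; first exact: enum_uniq.
by move=> x; rewrite mem_enum lZ.
Qed.

Lemma P0 : P set0 = Some (ea_zero C).
Proof. by rewrite (@P_list _ [::]) // => x; rewrite in_set0. Qed.

Lemma P1 x : P [set x] = Some (f x).
Proof. by rewrite (@P_list _ [:: x]) //= ?sum0 // => y; rewrite in_set1 inE. Qed.

Lemma P_cat (Z W : {set 'I_k}) : [disjoint Z & W] -> P (Z :|: W) = osum f (enum Z ++ enum W).
Proof.
move=> d; apply: P_list.
  rewrite cat_uniq !enum_uniq /= andbT; apply/hasPn => x; rewrite !mem_enum => xW.
  by apply/negP => xZ; rewrite (disjointFr d xZ) in xW.
by move=> x; rewrite mem_cat !mem_enum in_setU.
Qed.

Lemma P_union (Z W : {set 'I_k}) s1 s2 r : [disjoint Z & W] -> P Z = Some s1 -> P W = Some s2 ->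
  ea_sum s1 s2 = Some r -> P (Z :|: W) = Some r.
Proof. move=> d h1 h2 h3; rewrite P_cat //; exact: osum_merge h1 h2 h3. Qed.

Lemma P_union_inv (Z W : {set 'I_k}) r : [disjoint Z & W] -> P (Z :|: W) = Some r ->
  exists s1 s2, P Z = Some s1 /\ P W = Some s2 /\ ea_sum s1 s2 = Some r.
Proof. move=> d; rewrite P_cat //; exact: osum_split. Qed.

Definition Gf (Z : {set 'I_k}) : C := odflt (ea_zero C) (P Z).

Lemma Gf_spec : P setT = Some (ea_one C) ->
  is_beamor Gf /\ forall Z, P Z = Some (Gf Z).
Proof.
move=> hT.
have hZ : forall Z, P Z = Some (Gf Z).
  move=> Z; have d : [disjoint Z & ~: Z] by rewrite -setI_eq0 setICr.
  move: hT; rewrite -(setUCr Z) => /(P_union_inv d) [s1 [s2 [h1 _]]].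
  by rewrite /Gf h1.
split=> //; split; first by rewrite /Gf hT.
move=> X Y d; case: (P_union_inv d (hZ _)) => s1 [s2 [h1 [h2 h3]]].
by rewrite (hZ X) in h1; rewrite (hZ Y) in h2; case: h1 => ->; case: h2 => ->.
Qed.
End OsumSet.

Definition pr m n (k : 'I_(m * n)) : 'I_m * 'I_n :=
  enum_val (cast_ord (esym (mxvec_cast m n)) k).

Lemma prK m n (i : 'I_m) (j : 'I_n) : pr (mxvec_index i j) = (i, j).
Proof. by rewrite /pr /mxvec_index cast_ordK enum_rankK. Qed.

Lemma prKV m n (k : 'I_(m * n)) : mxvec_index (pr k).1 (pr k).2 = k.
Proof. by rewrite /mxvec_index -surjective_pairing /pr enum_valK cast_ordKV. Qed.

Lemma pr_inj m n : injective (@pr m n).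
Proof. by move=> k1 k2 e; rewrite -(prKV k1) -(prKV k2) e. Qed.

Lemma cinlE m n (X : {set 'I_m}) : cinl n X = [set k | (pr k).1 \in X].
Proof.
apply/setP => k; rewrite !inE; apply/existsP/idP.
  by case=> i /andP [iX /existsP [j /eqP ->]]; rewrite prK.
by move=> h; exists (pr k).1; rewrite h /=; apply/existsP; exists (pr k).2; rewrite prKV.
Qed.

Lemma cinrE m n (Y : {set 'I_n}) : cinr m Y = [set k | (pr k).2 \in Y].
Proof.
apply/setP => k; rewrite !inE; apply/existsP/idP.
  by case=> i /existsP [j /andP [jY /eqP ->]]; rewrite prK.
move=> h; exists (pr k).1; apply/existsP; exists (pr k).2; by rewrite h prKV eqxx.
Qed.

Definition Rect m n (S : {set 'I_m}) (S' : {set 'I_n}) : {set 'I_(m * n)} :=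
  cinl n S :&: cinr m S'.

Lemma RectE m n S S' : @Rect m n S S' = [set k | ((pr k).1 \in S) && ((pr k).2 \in S')].
Proof. by apply/setP => k; rewrite /Rect cinlE cinrE !inE. Qed.

Lemma Rect1 m n (k : 'I_(m * n)) : [set k] = Rect [set (pr k).1] [set (pr k).2].
Proof.
apply/setP => k'; rewrite RectE !inE; apply/eqP/andP.
  by move=> ->.
by case=> /eqP e1 /eqP e2; apply: pr_inj; rewrite [pr k']surjective_pairing e1 e2 -surjective_pairing.
Qed.

Lemma bhom_ext m n (f g : bhom m n) : (forall X, f X = g X) -> f = g.
Proof.
case: f g => f fP [g gP] /= e.
have ee : f = g by apply: functional_extensionality.
subst g; by rewrite (proof_irrelevance _ fP gP).
Qed.

Lemma RA_ext (A : EffectAlgebra) n (f g : RA A n) : (forall X, f X = g X) -> f = g.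
Proof.
case: f g => f fP [g gP] /= e.
have ee : f = g by apply: functional_extensionality.
subst g; by rewrite (proof_irrelevance _ fP gP).
Qed.

Lemma is_boolhom_id n : is_boolhom (fun X : {set 'I_n} => X).
Proof. by do !split. Qed.
Definition idb n : bhom n n := BHom (@is_boolhom_id n).

Lemma is_boolhom_pre m n (phi : 'I_n -> 'I_m) : is_boolhom (fun X : {set 'I_m} => phi @^-1: X).
Proof.
split; first exact: preimset0. split; first exact: preimsetT.
split; first exact: preimsetU. split; first exact: preimsetI. exact: preimsetC.
Qed.
Definition pre m n (phi : 'I_n -> 'I_m) : bhom m n := BHom (is_boolhom_pre phi).

Definition Phi m n m' n' (phi : 'I_m' -> 'I_m) (psi : 'I_n' -> 'I_n) (k : 'I_(m' * n')) : 'I_(m * n) :=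
  mxvec_index (phi (pr k).1) (psi (pr k).2).

Lemma pre_coprod m n m' n' (phi : 'I_m' -> 'I_m) (psi : 'I_n' -> 'I_n) :
  is_coprod_map (pre phi) (pre psi) (pre (Phi phi psi)).
Proof.
split=> X; apply/setP => k; rewrite /= ?cinlE ?cinrE !inE /Phi prK //=.
Qed.

Lemma pre_Rect m n m' n' (phi : 'I_m' -> 'I_m) (psi : 'I_n' -> 'I_n) S S' :
  pre (Phi phi psi) (Rect S S') = Rect (phi @^-1: S) (psi @^-1: S').
Proof. apply/setP => k; rewrite /= !RectE !inE /Phi prK //=. Qed.

Lemma bhom_Rect m n m' n' (u : bhom m m') (v : bhom n n') (w : bhom (m * n) (m' * n')) S S' :
  is_coprod_map u v w -> w (Rect S S') = Rect (u S) (v S').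
Proof.
move=> [hl hr]; case: (bfunP w) => _ [_ [_ [wI _]]]; by rewrite /Rect wI hl hr.
Qed.

Section RectLemmas.
Variables m n : nat.
Implicit Types (X Y : {set 'I_m}) (U V : {set 'I_n}).
Lemma RectUl X Y U : Rect (X :|: Y) U = Rect X U :|: @Rect m n Y U.
Proof. by apply/setP => k; rewrite !(RectE, inE) andb_orl. Qed.
Lemma RectUr X U V : Rect X (U :|: V) = Rect X U :|: @Rect m n X V.
Proof. by apply/setP => k; rewrite !(RectE, inE) andb_orr. Qed.
Lemma RectIl X Y U : Rect X U :&: @Rect m n Y U = Rect (X :&: Y) U.
Proof. by apply/setP => k; rewrite !(RectE, inE); case: (_ \in X); case: (_ \in Y); case: (_ \in U). Qed.
Lemma RectIr X U V : Rect X U :&: @Rect m n X V = Rect X (U :&: V).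
Proof. by apply/setP => k; rewrite !(RectE, inE); case: (_ \in X); case: (_ \in U); case: (_ \in V). Qed.
Lemma Rect0l U : @Rect m n set0 U = set0.
Proof. by apply/setP => k; rewrite !(RectE, inE). Qed.
Lemma Rect0r X : @Rect m n X set0 = set0.
Proof. by apply/setP => k; rewrite !(RectE, inE) andbF. Qed.
Lemma RectTT : @Rect m n setT setT = setT.
Proof. by apply/setP => k; rewrite !(RectE, inE). Qed.
Lemma Rect_disjl X Y U : [disjoint X & Y] -> [disjoint Rect X U & @Rect m n Y U].
Proof. by rewrite -!setI_eq0 RectIl => /eqP ->; rewrite Rect0l. Qed.
Lemma Rect_disjr X U V : [disjoint U & V] -> [disjoint Rect X U & @Rect m n X V].
Proof. by rewrite -!setI_eq0 RectIr => /eqP ->; rewrite Rect0r. Qed.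
End RectLemmas.

Lemma setcons (T : finType) (x : T) (s : seq T) : x \notin s ->
  [set y in x :: s] = [set x] :|: [set y in s] /\ [disjoint [set x] & [set y in s]].
Proof.
move=> xs; split; first by apply/setP => y; rewrite !inE.
by rewrite disjoints1 inE.
Qed.
Lemma setcons_in (T : finType) (x : T) (s : seq T) : x \in s ->
  [set y in x :: s] = [set y in s].
Proof. move=> xs; apply/setP => y; rewrite !inE; case: eqP => // ->; by rewrite xs. Qed.
Lemma setnil (T : finType) : [set y in ([::] : seq T)] = set0.
Proof. by apply/setP => y; rewrite !inE. Qed.

Section Exist.
Variables (A B C : EffectAlgebra) (h : A -> B -> C) (hb : is_bimor h).
Variables (m n : nat) (a : RA A m) (b : RA B n).

Definition fh (k : 'I_(m * n)) : C := h (a [set (pr k).1]) (b [set (pr k).2]).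

Lemma P_inner i (s : seq 'I_n) :
  P fh (Rect [set i] [set x in s]) = Some (h (a [set i]) (b [set x in s])).
Proof.
elim: s => [|j s IH].
  by rewrite setnil Rect0r P0 (beamor0 (rfunP b)) bimor_r0.
case: (boolP (j \in s)) => js; first by rewrite setcons_in.
case: (setcons js) => -> d.
rewrite RectUr; apply: (P_union (Rect_disjr _ d) _ IH).
  have -> : Rect [set i] [set j] = [set mxvec_index i j] :> {set 'I_(m * n)}.
    by rewrite (Rect1 (mxvec_index i j)) prK.
  by rewrite P1 /fh prK.
case: hb => _ [_ H]; apply: H; apply: (proj2 (rfunP b)); exact: d.
Qed.

Lemma P_outer (s : seq 'I_m) S' :
  P fh (Rect [set x in s] S') = Some (h (a [set x in s]) (b S')).
Proof.
elim: s => [|i s IH].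
  by rewrite setnil Rect0l P0 (beamor0 (rfunP a)) bimor_l0.
case: (boolP (i \in s)) => is_; first by rewrite setcons_in.
case: (setcons is_) => -> d.
rewrite RectUl; apply: (P_union (Rect_disjl _ d) _ IH).
  by rewrite -{1}(set_enum S') P_inner set_enum.
case: hb => _ [H _]; apply: H; apply: (proj2 (rfunP a)); exact: d.
Qed.

Lemma P_rect S S' : P fh (Rect S S') = Some (h (a S) (b S')).
Proof. by rewrite -(set_enum S) P_outer. Qed.

Lemma ex_G : exists G : {set 'I_(m * n)} -> C,
  is_beamor G /\ forall S S', G (Rect S S') = h (a S) (b S').
Proof.
have hT : P fh setT = Some (ea_one C).
  rewrite -RectTT P_rect (proj1 (rfunP a)) (proj1 (rfunP b)); by case: hb => ->.
case: (Gf_spec hT) => G1 G2; exists (Gf fh); split=> // S S'.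
by have := G2 (Rect S S'); rewrite P_rect; case.
Qed.
End Exist.

Lemma beamor_uniq k (C : EffectAlgebra) (g1 g2 : {set 'I_k} -> C) :
  is_beamor g1 -> is_beamor g2 -> (forall z, g1 [set z] = g2 [set z]) ->
  forall Z, g1 Z = g2 Z.
Proof.
move=> b1 b2 e Z; rewrite -(set_enum Z); elim: (enum Z) => [|x s IH].
  by rewrite setnil (beamor0 b1) (beamor0 b2).
case: (boolP (x \in s)) => xs; first by rewrite setcons_in.
case: (setcons xs) => -> d.
have h1 := proj2 b1 _ _ d; have h2 := proj2 b2 _ _ d.
by rewrite -e -IH h1 in h2; case: h2.
Qed.

Section Ebeam.
Variable (C : EffectAlgebra).
Definition f2 (x : C) (i : 'I_2) : C := if i == ord0 then x else oc x.
Lemma E_total (x : C) : P (f2 x) setT = Some (ea_one C).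
Proof.
rewrite (@P_list _ _ _ _ [:: ord0; ord_max]) //.
  by rewrite /= /f2 /= sum0 ocP.
move=> i; rewrite !inE; case: i => [[|[|]]] // ?.
Qed.
Definition Ebeam (x : C) : RA C 2 := MkRA (proj1 (Gf_spec (E_total x))).
Lemma Ebeam0 x : Ebeam x [set ord0] = x.
Proof. by rewrite /= /Gf P1. Qed.
Lemma EbeamT x : Ebeam x setT = ea_one C.
Proof. exact: (proj1 (rfunP (Ebeam x))). Qed.

Lemma RA2 (g : RA C 2) : g = Ebeam (g [set ord0]).
Proof.
apply: RA_ext; apply: beamor_uniq; [exact: rfunP | exact: rfunP|].
have d : [disjoint [set (ord0 : 'I_2)] & [set ord_max]] by rewrite disjoints1 inE.
have U : [set (ord0 : 'I_2)] :|: [set ord_max] = setT.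
  apply/setP => i; rewrite !inE; case: i => [[|[|]]] // ?.
case=> [[|[|]]] //= lt.
  have -> : Ordinal lt = ord0 by apply: val_inj.
  by rewrite /Gf P1 /f2 eqxx.
have -> : Ordinal lt = ord_max by apply: val_inj.
rewrite /= /Gf P1 /f2 /=.
apply: (ortho_uniq (x := g [set ord0])); last exact: ocP.
by rewrite (proj2 (rfunP g) _ _ d) U (proj1 (rfunP g)).
Qed.

Definition o30 : 'I_3 := @Ordinal 3 0 isT.
Definition o31 : 'I_3 := @Ordinal 3 1 isT.
Definition o32 : 'I_3 := @Ordinal 3 2 isT.

Lemma RA3 (x1 x2 x : C) : ea_sum x1 x2 = Some x -> exists g : RA C 3,
  [/\ g [set o30] = x1, g [set o31] = x2 & g ([set o30] :|: [set o31]) = x].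
Proof.
move=> hx.
pose f3 (i : 'I_3) := if val i == 0 then x1 else if val i == 1 then x2 else oc x.
have hT : P f3 setT = Some (ea_one C).
  rewrite (@P_list _ _ _ _ [:: o30; o31; o32]) //; last by move=> i; rewrite !inE; case: i => [[|[|[|]]]] // ?.
  rewrite /= /f3 /= sum0.
  case: (ea_assoc hx (ocP x)) => bc [-> ->] //.
have [gB gS] := Gf_spec hT.
exists (MkRA gB); rewrite /= /Gf !P1 /f3 /=; split => //.
have d : [disjoint [set o30] & [set o31]] by rewrite disjoints1 inE.
have := proj2 gB _ _ d; rewrite /Gf !P1 /f3 /= hx; by case.
Qed.
End Ebeam.

Lemma bcomp_idl m n (f : bhom m n) : bcomp (idb n) f = f.
Proof. by apply: bhom_ext. Qed.
Lemma bcomp_idr m n (f : bhom m n) : bcomp f (idb m) = f.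
Proof. by apply: bhom_ext. Qed.

Lemma eamor_id (C : EffectAlgebra) : is_eamor (fun c : C => c).
Proof. by split. Qed.
Lemma eamor_comp (X Y Z : EffectAlgebra) (g : Y -> Z) (f : X -> Y) :
  is_eamor g -> is_eamor f -> is_eamor (fun x => g (f x)).
Proof.
move=> [g1 gS] [f1 fS]; split; first by rewrite f1 g1.
by move=> a b c h; apply: gS; apply: fS.
Qed.
Lemma eamor_beamor k (X Y : EffectAlgebra) (f : X -> Y) (g : {set 'I_k} -> X) :
  is_eamor f -> is_beamor g -> is_beamor (fun Z => f (g Z)).
Proof.
move=> [f1 fS] [g1 gS]; split; first by rewrite g1 f1.
by move=> U V d; apply: fS; apply: gS.
Qed.

Section Cocone.
Variables (A B C : EffectAlgebra) (psi : forall p, DayEl A B p -> {set 'I_p} -> C).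
Hypothesis hpsi : is_cocone psi.

Lemma psi_eq p (x y : DayEl A B p) : day_eq x y -> forall X, psi x X = psi y X.
Proof.
move=> e X.
have arr : el_arrow x y (idb p).
  rewrite /el_arrow /day_act; case: y e => m n h a b e; rewrite bcomp_idr.
  exact: rst_sym.
by have := proj2 hpsi _ _ _ _ _ arr X.
Qed.

Definition beta (x : A) (y : B) : C :=
  psi (MkDay (idb (2 * 2)) (Ebeam x) (Ebeam y)) (Rect [set ord0] [set ord0]).

Lemma KEY m n (a : RA A m) (b : RA B n) S S' :
  psi (MkDay (idb (m * n)) a b) (Rect S S') = beta (a S) (b S').
Proof.
pose phS := fun k : 'I_m => if k \in S then ord0 else (ord_max : 'I_2).
pose phS' := fun k : 'I_n => if k \in S' then ord0 else (ord_max : 'I_2).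
have preS : phS @^-1: [set ord0] = S.
  by apply/setP => k; rewrite !inE /phS; case: (k \in S).
have preS' : phS' @^-1: [set ord0] = S'.
  by apply/setP => k; rewrite !inE /phS'; case: (k \in S').
have Eu : ramap (pre phS) a = Ebeam (a S).
  by rewrite [LHS]RA2 /= preS.
have Ev : ramap (pre phS') b = Ebeam (b S').
  by rewrite [LHS]RA2 /= preS'.
have st := DayStep (idb (2 * 2)) a b (pre_coprod phS phS').
have arr : el_arrow (MkDay (bcomp (pre (Phi phS phS')) (idb _)) a b)
                    (MkDay (idb (m * n)) a b) (pre (Phi phS phS')).
  by rewrite /el_arrow /day_act /= bcomp_idl bcomp_idr; apply: rst_refl.
have := proj2 hpsi _ _ _ _ _ arr (Rect [set ord0] [set ord0]).
rewrite pre_Rect preS preS' => ->.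
by rewrite -(psi_eq (@rst_step _ _ _ _ st)) Eu Ev.
Qed.

Lemma beta_bimor : is_bimor beta.
Proof.
split.
  have := KEY (Ebeam (ea_one A)) (Ebeam (ea_one B)) setT setT.
  rewrite !EbeamT RectTT => <-; exact: (proj1 ((proj1 hpsi) _ _)).
split.
  move=> y x1 x2 x hx; case: (RA3 hx) => g [g0 g1 g01].
  have k0 := KEY g (Ebeam y) [set o30] [set ord0]; rewrite g0 Ebeam0 in k0.
  have k1 := KEY g (Ebeam y) [set o31] [set ord0]; rewrite g1 Ebeam0 in k1.
  have k01 := KEY g (Ebeam y) ([set o30] :|: [set o31]) [set ord0]; rewrite g01 Ebeam0 in k01.
  rewrite -k0 -k1 -k01 RectUl; apply: (proj2 (proj1 hpsi _ _)).
  by apply: Rect_disjl; rewrite disjoints1 inE.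
move=> x y1 y2 y hy; case: (RA3 hy) => g [g0 g1 g01].
have k0 := KEY (Ebeam x) g [set ord0] [set o30]; rewrite g0 Ebeam0 in k0.
have k1 := KEY (Ebeam x) g [set ord0] [set o31]; rewrite g1 Ebeam0 in k1.
have k01 := KEY (Ebeam x) g [set ord0] ([set o30] :|: [set o31]); rewrite g01 Ebeam0 in k01.
rewrite -k0 -k1 -k01 RectUr; apply: (proj2 (proj1 hpsi _ _)).
by apply: Rect_disjr; rewrite disjoints1 inE.
Qed.
End Cocone.

Section Gamma.
Variables (A B C : EffectAlgebra) (h : A -> B -> C) (hb : is_bimor h).

Definition Gsig m n (a : RA A m) (b : RA B n) :=
  constructive_indefinite_description _ (ex_G hb a b).
Definition Gh m n (a : RA A m) (b : RA B n) := proj1_sig (Gsig a b).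
Lemma GhB m n (a : RA A m) (b : RA B n) : is_beamor (Gh a b).
Proof. exact: (proj1 (proj2_sig (Gsig a b))). Qed.
Lemma GhR m n (a : RA A m) (b : RA B n) S S' : Gh a b (Rect S S') = h (a S) (b S').
Proof. exact: (proj2 (proj2_sig (Gsig a b))). Qed.

Definition gam p (x : DayEl A B p) (X : {set 'I_p}) : C := Gh (da x) (db x) (dh x X).

Lemma gam_step p (x y : DayEl A B p) : day_step x y -> forall X, gam x X = gam y X.
Proof.
case=> m n m' n' u v w h0 a' b' cw X /=; rewrite /gam /=.
move: (h0 X) => Z; apply: (beamor_uniq (GhB _ _) (is_beamor_pre w (GhB a' b'))).
move=> z; by rewrite Rect1 GhR /= (bhom_Rect _ _ cw) GhR.
Qed.

Lemma gam_eq p (x y : DayEl A B p) : day_eq x y -> forall X, gam x X = gam y X.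
Proof.
move=> e; induction e as [x0 y0 s|x0|x0 y0 _ IH|x0 y0 z0 _ IH1 _ IH2] => X.
- exact: gam_step.
- by [].
- by rewrite IH.
- by rewrite IH1 IH2.
Qed.

Lemma gam_cocone : is_cocone gam.
Proof.
split; first by move=> p x; exact: (is_beamor_pre (dh x) (GhB _ _)).
move=> p q x y k e X; by rewrite -(gam_eq e X).
Qed.
End Gamma.

Theorem mainTheorem9 (A B T Lo : EffectAlgebra) (tau : A -> B -> T)
    (phi : forall p, DayEl A B p -> {set 'I_p} -> Lo) :
  is_tensor tau -> is_colimit phi -> ea_iso T Lo.
Proof.
move=> [taub tauU] [phic phiU].
have bb := beta_bimor phic.
case: (tauU Lo (beta phi) bb) => [[f [fm fe]] _].
have gc := gam_cocone taub.
case: (phiU T (gam taub) gc) => [[g [gm ge]] _].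
exists f, g; split => //; split => //; split.
  apply: (proj2 (tauU T tau taub) (fun t => g (f t)) (fun t => t)).
  - exact: eamor_comp.
  - exact: eamor_id.
  - move=> a b; rewrite fe /beta ge /gam /= GhR !Ebeam0 //.
  - by [].
apply: (proj2 (phiU Lo phi phic) (fun t => f (g t)) (fun t => t)).
- exact: eamor_comp.
- exact: eamor_id.
- move=> p x X; rewrite ge /gam; case: x => m n hx ax bx /=.
  have E : forall Z, f (Gh taub ax bx Z) = phi (m * n) (MkDay (idb (m * n)) ax bx) Z.
    apply: beamor_uniq; first exact: (eamor_beamor fm (GhB _ _ _)).
      exact: (proj1 phic).
    move=> z; by rewrite Rect1 GhR fe KEY.
  rewrite E.
  have arr : el_arrow (MkDay hx ax bx) (MkDay (idb (m * n)) ax bx) hx.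
    by rewrite /el_arrow /day_act /= bcomp_idl; apply: rst_refl.
  exact: (proj2 phic _ _ _ _ _ arr X).
- by [].
Qed.
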